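(* For positive integers $n, m$ with $m \le n$ define $$f(n,m) = \sum_{k=0}^{m-1} \binom{n}{k} \left(\frac{m}{n}\right)^k \left(1 - \frac{m}{n}\right)^{n-k}.$$ Then $f(n,m) \geq \frac{3}{8}$ for all integers $n \geq 100$ and $12 \leq m \leq \frac{n}{2} + 1$.
   Context: $f(n,m)$ is the probability that a binomial random variable with $n$ trials and success probability $m/n$ is at most $m-1$. *)

(* Defs.v *)
From mathcomp Require Import all_boot all_order all_algebra.
Set Implicit Arguments. Unset Strict Implicit. Unset Printing Implicit Defensive.
Import Order.TTheory GRing.Theory Num.Theory.
Local Open Scope ring_scope.

Definition f (R : realFieldType) (n m : nat) : R :=
  \sum_(0 <= k < m) ('C(n, k))%:R * ((m%:R / n%:R) ^+ k)
                     * ((1 - m%:R / n%:R) ^+ (n - k)).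

(* Main.v *)
Require Import Defs.
From mathcomp Require Import all_boot all_order all_algebra.
From mathcomp Require Import ring lra zify.
From Stdlib Require NArith Lia ZArith.
From Stdlib Require Import Zify.
Import Order.TTheory GRing.Theory Num.Theory.
Module Comp.
Import NArith Lia. Local Open Scope N_scope.
Definition SC : N := 2^24.
Fixpoint lsum (fuel : nat) (m T j x acc : N) : N :=
  match fuel with O => acc | S f =>
    match x with N0 => acc | _ =>
    let x' := x * (m - j) * T / (m * (T + j + 1)) in lsum f m T (j+1) x' (acc + x') end end.
Fixpoint usum (fuel : nat) (m j y acc : N) : N :=
  match fuel with O => acc + (y * m + j) / (j + 1) | S f =>
    if y <=? 64 then acc + (y * m + j) / (j + 1) else
    let y' := (y * m + (m + j)) / (m + j + 1) in usum f m (j+1) y' (acc + y') end.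
Definition Tof (m : N) := if m <=? 51 then 100 - m else m - 2.
Definition check (sc : N) (mn : nat) : bool := let m := N.of_nat mn in
  3 * sc + 3 * usum mn m 0 sc 0 <=? 5 * lsum mn m (Tof m) 0 sc 0.
Definition tn := N.to_nat.
Lemma lsum_S0 f m T j acc : lsum (S f) m T j 0 acc = acc. Proof. reflexivity. Qed.
Lemma lsum_S f m T j p acc : lsum (S f) m T j (Npos p) acc =
  lsum f m T (j+1) (Npos p * (m - j) * T / (m * (T + j + 1))) (acc + Npos p * (m - j) * T / (m * (T + j + 1))).
Proof. reflexivity. Qed.
Lemma usum_0 m j y acc : usum 0 m j y acc = acc + (y * m + j) / (j + 1). Proof. reflexivity. Qed.
Lemma usum_S f m j y acc : usum (S f) m j y acc =
  if y <=? 64 then acc + (y * m + j) / (j + 1) else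
  usum f m (j+1) ((y * m + (m + j)) / (m + j + 1)) (acc + (y * m + (m + j)) / (m + j + 1)).
Proof. reflexivity. Qed.
Lemma tn_mul a b : tn (a * b) = muln (tn a) (tn b).
Proof. unfold tn. rewrite N2Nat.inj_mul. reflexivity. Qed.
Lemma tn_add a b : tn (a + b) = addn (tn a) (tn b).
Proof. unfold tn. rewrite N2Nat.inj_add. reflexivity. Qed.
Lemma tn_sub a b : tn (a - b) = subn (tn a) (tn b).
Proof. unfold tn. rewrite N2Nat.inj_sub. reflexivity. Qed.
Lemma tn_1 : tn 1 = 1%nat. Proof. reflexivity. Qed.
Lemma tn_0 : tn 0 = 0%nat. Proof. reflexivity. Qed.
Lemma tn_of n : tn (N.of_nat n) = n. Proof. apply Nat2N.id. Qed.
Lemma SC_pos : leq 1 (tn SC).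
Proof. apply/ssrnat.leP. unfold tn. assert (h : SC <> 0) by (unfold SC; discriminate). lia. Qed.
Lemma div_le a b : leq (muln (tn (a / b)) (tn b)) (tn a).
Proof.
apply/ssrnat.leP. unfold tn. rewrite <- multE, <- N2Nat.inj_mul.
destruct (N.eq_dec b 0) as [->|hb]. { rewrite N.mul_0_r. lia. }
pose proof (N.Div0.mul_div_le a b). lia.
Qed.
Lemma ceil_ge a c : leq (tn a) (muln (tn ((a + c) / (c + 1))) (tn (c + 1))).
Proof.
apply/ssrnat.leP. unfold tn. rewrite <- multE, <- N2Nat.inj_mul.
assert (h : c + 1 <> 0) by lia.
pose proof (N.div_mod (a + c) (c + 1) h). pose proof (N.mod_lt (a + c) (c + 1) h). lia.
Qed.
Lemma Tof_le (mn t : nat) : leq (subn 100 mn) t -> leq (subn mn 2) t -> leq (tn (Tof (N.of_nat mn))) t.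
Proof.
move=> /ssrnat.leP h1 /ssrnat.leP h2; apply/ssrnat.leP. unfold Tof, tn.
rewrite -minusE in h1 h2.
destruct (N.of_nat mn <=? 51); rewrite N2Nat.inj_sub Nat2N.id;
 [change (N.to_nat 100) with 100%nat | change (N.to_nat 2) with 2%nat]; lia.
Qed.
Lemma check_spec sc mn : check sc mn = true ->
  leq (tn (3 * sc + 3 * usum mn (N.of_nat mn) 0 sc 0))
      (tn (5 * lsum mn (N.of_nat mn) (Tof (N.of_nat mn)) 0 sc 0)).
Proof.
unfold check. intro h. apply N.leb_le in h.
apply/ssrnat.leP. unfold tn. lia.
Qed.
Lemma tn_3 : tn 3 = 3%nat. Proof. reflexivity. Qed.
Lemma tn_5 : tn 5 = 5%nat. Proof. reflexivity. Qed.
Global Opaque tn.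
End Comp.
Local Open Scope ring_scope.

Definition alpha (R : realFieldType) (m t j : nat) : R :=
  \prod_(i < j) (((m - i) * t)%N%:R / ((m * (t + i.+1))%N%:R)).
Definition gamma (R : realFieldType) (m j : nat) : R :=
  \prod_(i < j) (m%:R / ((m + i.+1)%N%:R)).

Lemma alphaS (R : realFieldType) m t j :
  alpha R m t j.+1 = alpha R m t j * (((m - j) * t)%N%:R / ((m * (t + j.+1))%N%:R)).
Proof. by rewrite /alpha big_ord_recr. Qed.
Lemma gammaS (R : realFieldType) m j :
  gamma R m j.+1 = gamma R m j * (m%:R / ((m + j.+1)%N%:R)).
Proof. by rewrite /gamma big_ord_recr. Qed.
Lemma alpha0 (R : realFieldType) m t : alpha R m t 0 = 1.
Proof. by rewrite /alpha big_ord0. Qed.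
Lemma gamma0 (R : realFieldType) m : gamma R m 0 = 1.
Proof. by rewrite /gamma big_ord0. Qed.

Lemma alpha_ge0 (R : realFieldType) m t j : 0 <= alpha R m t j.
Proof. by apply: prodr_ge0 => i _; apply: divr_ge0; apply: ler0n. Qed.
Lemma gamma_ge0 (R : realFieldType) m j : 0 <= gamma R m j.
Proof. by apply: prodr_ge0 => i _; apply: divr_ge0; apply: ler0n. Qed.

Lemma frac_le1 (R : realFieldType) (a b : nat) : (a <= b)%N -> a%:R / b%:R <= 1 :> R.
Proof.
move=> ab; case: (posnP b) => [b0|bp].
  by rewrite b0 invr0 mulr0.
by rewrite ler_pdivrMr ?ltr0n // mul1r ler_nat.
Qed.

Lemma alpha_dec (R : realFieldType) m t j : alpha R m t j.+1 <= alpha R m t j.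
Proof.
rewrite alphaS -[X in _ <= X]mulr1; apply: ler_wpM2l; first exact: alpha_ge0.
apply: frac_le1; nia.
Qed.
Lemma gamma_dec (R : realFieldType) m j : gamma R m j.+1 <= gamma R m j.
Proof.
rewrite gammaS -[X in _ <= X]mulr1; apply: ler_wpM2l; first exact: gamma_ge0.
by apply: frac_le1; rewrite leq_addr.
Qed.
Local Open Scope ring_scope.

Definition bb (R : realFieldType) (n m k : nat) : R :=
  ('C(n, k))%:R * ((m%:R / n%:R) ^+ k) * ((1 - m%:R / n%:R) ^+ (n - k)).

Lemma bb_ge0 (R : realFieldType) n m k : (m <= n)%N -> 0 <= bb R n m k.
Proof.
move=> mn; rewrite /bb; apply: mulr_ge0; first apply: mulr_ge0 => //.
  by apply: exprn_ge0; apply: divr_ge0.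
apply: exprn_ge0; rewrite subr_ge0; exact: frac_le1.
Qed.

Lemma q_eq (R : realFieldType) n m : (0 < n)%N -> (m <= n)%N ->
  1 - m%:R / n%:R = (n - m)%N%:R / n%:R :> R.
Proof.
move=> np mn; rewrite natrB // mulrBl divff // pnatr_eq0 -lt0n //.
Qed.

Lemma bb_ratio (R : realFieldType) n m k : (0 < n)%N -> (m <= n)%N ->
  bb R n m k.+1 * ((k.+1 * (n - m))%N%:R) = bb R n m k * (((n - k) * m)%N%:R).
Proof.
move=> np mn; rewrite /bb q_eq //.
have n0 : n%:R != 0 :> R by rewrite pnatr_eq0 -lt0n.
case: (ltnP k n) => kn.
  have e : (n - k = (n - k.+1).+1)%N by lia.
  rewrite e.
  have hb := mul_bin_left n k.
  have : ('C(n, k.+1) * k.+1)%N%:R = ((n - k) * 'C(n, k))%N%:R :> R by rewrite mulnC hb.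
  rewrite !natrM -e => hb'.
  rewrite !exprS.
  set p := m%:R / n%:R; set P := p ^+ k; set Q := ((n - m)%N%:R / n%:R) ^+ (n - k.+1).
  have -> : 'C(n, k.+1)%:R * (p * P) * Q * (k.+1%:R * (n - m)%N%:R)
     = ('C(n, k.+1)%:R * k.+1%:R) * P * Q * (p * (n - m)%N%:R) by ring.
  rewrite hb' /p e exprS /Q; field; exact: n0.
have -> : 'C(n, k.+1) = 0%N by rewrite bin_small.
have -> : (n - k = 0)%N by lia.
by rewrite mul0n !mulr0n !mul0r mulr0.
Qed.

Lemma bb_left (R : realFieldType) n m j : (0 < m)%N -> (m <= n)%N -> (j <= m)%N ->
  bb R n m (m - j) = bb R n m m * alpha R m (n - m) j.
Proof.
move=> mp mn; elim: j => [|j IH] jm; first by rewrite subn0 alpha0 mulr1.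
have np : (0 < n)%N by lia.
have := bb_ratio R n m (m - j.+1) np mn.
have -> : ((m - j.+1).+1 = m - j)%N by lia.
have -> : (n - (m - j.+1) = (n - m) + j.+1)%N by lia.
rewrite IH ?(ltnW jm) // alphaS => h.
have hz : (((n - m) + j.+1) * m)%N%:R != 0 :> R by rewrite pnatr_eq0 muln_eq0; lia.
apply: (mulIf hz); rewrite -h mulnC [(_ * m)%N]mulnC; field.
rewrite nat1r -natrD !pnatr_eq0; lia.
Qed.

Lemma bb_right (R : realFieldType) n m j : (m < n)%N ->
  bb R n m (m + j) <= bb R n m m * gamma R m j.
Proof.
move=> mn; elim: j => [|j IH]; first by rewrite addn0 gamma0 mulr1.
have np : (0 < n)%N by lia.
have := bb_ratio R n m (m + j) np (ltnW mn).
rewrite -addnS gammaS => h.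
have hp : (0 : R) < ((m + j.+1) * (n - m))%N%:R by rewrite ltr0n muln_gt0; lia.
have : bb R n m (m + j.+1) <= bb R n m (m + j) * (m%:R / (m + j.+1)%N%:R).
  rewrite -(ler_pM2r hp) h.
  have -> : bb R n m (m + j) * (m%:R / (m + j.+1)%N%:R) * ((m + j.+1) * (n - m))%N%:R
     = bb R n m (m + j) * ((n - m) * m)%N%:R.
    rewrite !natrM; field; rewrite nat1r -natrD pnatr_eq0; lia.
  apply: ler_wpM2l; first exact: bb_ge0 (ltnW mn).
  rewrite ler_nat leq_mul2r; apply/orP; right; lia.
move/le_trans; apply; rewrite mulrA; apply: ler_wpM2r => //.
by apply: divr_ge0; apply: ler0n.
Qed.

Lemma bb_rstep (R : realFieldType) n m j : (m < n)%N ->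
  bb R n m (m + j.+1) <= bb R n m (m + j) * (m%:R / (m + j.+1)%N%:R).
Proof.
move=> mn; have np : (0 < n)%N by lia.
have h := bb_ratio R n m (m + j) np (ltnW mn); rewrite -addnS in h.
have hp : (0 : R) < ((m + j.+1) * (n - m))%N%:R by rewrite ltr0n muln_gt0; lia.
rewrite -(ler_pM2r hp) h.
have -> : bb R n m (m + j) * (m%:R / (m + j.+1)%N%:R) * ((m + j.+1) * (n - m))%N%:R
   = bb R n m (m + j) * ((n - m) * m)%N%:R.
  rewrite !natrM; field; rewrite nat1r -natrD pnatr_eq0; lia.
apply: ler_wpM2l; first exact: bb_ge0 (ltnW mn).
rewrite ler_nat leq_mul2r; apply/orP; right; lia.
Qed.

Lemma sum_widen (R : realFieldType) (F : nat -> R) N M : (N <= M)%N -> (forall j, 0 <= F j) ->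
  \sum_(0 <= j < N) F j <= \sum_(0 <= j < M) F j.
Proof.
move=> NM F0; rewrite (@big_cat_nat _ _ _ N 0 M _ _ (leq0n N) NM) /= lerDl.
by apply: sumr_ge0 => i _.
Qed.

Lemma geo_tail (R : realFieldType) (rho : R) : 0 <= rho -> rho < 1 ->
  forall N (y : nat -> R), (forall k, 0 <= y k) -> (forall k, y k.+1 <= rho * y k) ->
  \sum_(0 <= k < N) y k.+1 <= y 0%N * rho / (1 - rho).
Proof.
move=> r0 r1; elim=> [|N IH] y y0 ys.
  rewrite big_geq // mulr_ge0 // ?mulr_ge0 // invr_ge0 subr_ge0 ltW //.
rewrite big_nat_recl //.
apply: le_trans (lerD (lexx _) (IH (fun k => y k.+1) _ _)) _ => //.
have h1 : 0 < 1 - rho by rewrite subr_gt0.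
have -> : y 1%N + y 1%N * rho / (1 - rho) = y 1%N / (1 - rho) by field; rewrite lt0r_neq0.
rewrite ler_pdivrMr // mulrVK ?unitfE ?lt0r_neq0 //.
by rewrite mulrC; apply: ys.
Qed.

Lemma right_sum (R : realFieldType) n m N J : (0 < m)%N -> (m < n)%N ->
  \sum_(0 <= j < N) bb R n m (m + j.+1) <=
  bb R n m m * (\sum_(0 <= j < J) gamma R m j.+1 + gamma R m J * m%:R / J.+1%:R).
Proof.
move=> mp mn.
apply: le_trans (@sum_widen R _ N (J + N) (leq_addl J N) _) _; first by move=> j; apply: bb_ge0; lia.
rewrite (@big_cat_nat _ _ _ J 0 (J + N) _ _ (leq0n J) (leq_addr _ _)) /=.
rewrite mulrDr; apply: lerD.
  rewrite mulr_sumr; apply: ler_sum => j _; exact: bb_right.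
rewrite -{1}(add0n J) big_addn addKn.
set rho : R := m%:R / (m + J.+1)%N%:R.
have r0 : 0 <= rho by apply: divr_ge0; apply: ler0n.
have r1 : rho < 1 by rewrite /rho ltr_pdivrMr ?ltr0n ?mul1r ?ltr_nat; lia.
have := @geo_tail R rho r0 r1 N (fun k => bb R n m (m + (J + k))).
rewrite addn0 => h.
have e : \sum_(0 <= i < N) bb R n m (m + (i + J).+1) = \sum_(0 <= k < N) bb R n m (m + (J + k.+1)).
  by apply: eq_bigr => i _; congr (bb R n m _); lia.
rewrite e; apply: le_trans (h _ _) _.
- by move=> k; apply: bb_ge0; lia.
- move=> k; rewrite addnS; apply: le_trans (bb_rstep R n m (J + k) mn) _.
  rewrite mulrC; apply: ler_wpM2r; first by apply: bb_ge0; lia.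
  rewrite /rho; apply: ler_pM => //; first by rewrite invr_ge0 ler0n.
  rewrite lef_pV2 ?posrE ?ltr0n ?ler_nat; lia.
rewrite -mulrA.
have -> : rho / (1 - rho) = m%:R / J.+1%:R.
  rewrite /rho; field; rewrite nat1r -natrD !pnatr_eq0; lia.
rewrite !mulrA; apply: ler_wpM2r; first by rewrite invr_ge0 ler0n.
by apply: ler_wpM2r; [apply: ler0n | exact: bb_right].
Qed.

Lemma bb_total (R : realFieldType) n m : (0 < n)%N -> (m <= n)%N ->
  \sum_(0 <= k < n.+1) bb R n m k = 1.
Proof.
move=> np mn.
have : (1 - m%:R / n%:R + m%:R / n%:R) ^+ n = 1 :> R by rewrite subrK expr1n.
rewrite exprDn big_mkord => <-; apply: eq_bigr => i _.
by rewrite /bb -mulr_natl; ring.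
Qed.

Lemma key (R : realFieldType) n m J : (0 < m)%N -> (m < n)%N ->
  3 * (1 + (\sum_(0 <= j < J) gamma R m j.+1 + gamma R m J * m%:R / J.+1%:R))
   <= 5 * \sum_(0 <= j < m) alpha R m (n - m) j.+1 ->
  3 / 8 <= f R n m.
Proof.
move=> mp mn H.
have np : (0 < n)%N by lia.
have -> : f R n m = \sum_(0 <= k < m) bb R n m k by [].
have tot := bb_total R n m np (ltnW mn).
have mn1 : (m <= n.+1)%N by lia.
rewrite (@big_cat_nat _ _ _ m 0 n.+1 _ _ (leq0n m) mn1) /= in tot.
have hl : \sum_(0 <= k < m) bb R n m k = bb R n m m * \sum_(0 <= j < m) alpha R m (n - m) j.+1.
  rewrite big_nat_rev /= mulr_sumr; apply: eq_big_nat => k km.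
  by rewrite add0n bb_left //; lia.
have hr : \sum_(m <= k < n.+1) bb R n m k = bb R n m m + \sum_(0 <= j < n - m) bb R n m (m + j.+1).
  rewrite -{1}(add0n m) big_addn subSn ?(ltnW mn) // big_nat_recl // add0n.
  by congr (_ + _); apply: eq_bigr => j _; rewrite addnC.
have hR := right_sum R n m (n - m) J mp mn.
set A := \sum_(0 <= j < m) alpha R m (n - m) j.+1 in H hl.
set G := \sum_(0 <= j < J) gamma R m j.+1 + gamma R m J * m%:R / J.+1%:R in H hR.
set B := bb R n m m in hl hr hR.
have B0 : 0 <= B by apply: bb_ge0; lia.
have h1 : 3 * (B * (1 + G)) <= 5 * (B * A).
  by rewrite mulrCA [X in _ <= X]mulrCA; apply: ler_wpM2l.
rewrite hl; rewrite hl hr in tot; rewrite mulrDr mulr1 in h1; lra.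
Qed.

Notation N1 := (BinNums.Npos BinNums.xH).
Definition Nr (R : realFieldType) (x : BinNums.N) : R := (Comp.tn x)%:R.

Lemma frac_le (R : realFieldType) (a b c d : nat) : (0 < b)%N -> (0 < d)%N ->
  (a * d <= c * b)%N -> a%:R / b%:R <= c%:R / d%:R :> R.
Proof.
move=> bp dp h; rewrite ler_pdivrMr ?ltr0n // mulrAC ler_pdivlMr ?ltr0n //.
by rewrite -!natrM ler_nat.
Qed.

Lemma Nr_div_le (R : realFieldType) a b : (0 < Comp.tn b)%N ->
  Nr R (BinNat.N.div a b) <= Nr R a / Nr R b.
Proof.
move=> bp; rewrite /Nr ler_pdivlMr ?ltr0n // -natrM ler_nat; exact: Comp.div_le.
Qed.

Lemma Nr_ceil (R : realFieldType) a c :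
  Nr R a / Nr R (BinNat.N.add c N1) <= Nr R (BinNat.N.div (BinNat.N.add a c) (BinNat.N.add c N1)).
Proof.
have cp : (0 < Comp.tn (BinNat.N.add c N1))%N by rewrite Comp.tn_add Comp.tn_1 addn1.
rewrite /Nr ler_pdivrMr ?ltr0n // -natrM ler_nat; exact: Comp.ceil_ge.
Qed.

Lemma lsum_sound (R : realFieldType) (sc : BinNums.N) fuel m T j x acc t :
  (0 < Comp.tn m)%N -> (Comp.tn T <= t)%N ->
  Nr R x <= Nr R sc * alpha R (Comp.tn m) t (Comp.tn j) ->
  Nr R acc <= Nr R sc * \sum_(0 <= k < Comp.tn j) alpha R (Comp.tn m) t k.+1 ->
  Nr R (Comp.lsum fuel m T j x acc)
    <= Nr R sc * \sum_(0 <= k < Comp.tn j + fuel) alpha R (Comp.tn m) t k.+1.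
Proof.
move=> mp Tt; elim: fuel j x acc => [|f IH] j x acc hx hacc.
  by rewrite addn0.
have wid : Nr R acc <= Nr R sc * \sum_(0 <= k < Comp.tn j + f.+1) alpha R (Comp.tn m) t k.+1.
  apply: le_trans hacc _; apply: ler_wpM2l; first exact: ler0n.
  by apply: sum_widen; [exact: leq_addr | move=> k; exact: alpha_ge0].
case: x hx => [|p] hx; first by rewrite Comp.lsum_S0; exact: wid.
rewrite Comp.lsum_S.
set x := BinNums.Npos p in hx *.
set jn := Comp.tn j in hx hacc wid *; set mn := Comp.tn m in hx hacc wid mp *.
have ej : Comp.tn (BinNat.N.add j N1) = jn.+1 by rewrite Comp.tn_add Comp.tn_1 addn1.
set x' := BinNat.N.div _ _.
have hx' : Nr R x' <= Nr R sc * alpha R mn t jn.+1.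
  have Dp : (0 < Comp.tn (BinNat.N.mul m (BinNat.N.add (BinNat.N.add T j) N1)))%N.
    by rewrite Comp.tn_mul !Comp.tn_add Comp.tn_1 muln_gt0 mp addn1.
  have hh := Nr_div_le R (BinNat.N.mul (BinNat.N.mul x (BinNat.N.sub m j)) T) _ Dp. rewrite /x'.
  apply: (le_trans hh).
  rewrite /Nr !Comp.tn_mul !Comp.tn_add Comp.tn_sub Comp.tn_1 -/jn -/mn.
  rewrite alphaS mulrA -mulnA natrM -mulrA.
  apply: ler_pM.
  + exact: ler0n.
  + apply: divr_ge0; apply: ler0n.
  + exact: hx.
  + apply: frac_le; [nia | nia |].
    set TT := Comp.tn T; set a := (mn - jn)%N.
    have h : (TT * (t + jn.+1) <= t * (TT + jn + 1))%N by nia.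
    have e1 : (a * TT * (mn * (t + jn.+1)) = a * mn * (TT * (t + jn.+1)))%N by ring.
    have e2 : (a * t * (mn * (TT + jn + 1)) = a * mn * (t * (TT + jn + 1)))%N by ring.
    by rewrite e1 e2 leq_mul2l h orbT.
rewrite -addSnnS -ej; apply: IH; rewrite ej //.
rewrite /Nr Comp.tn_add natrD big_nat_recr //= mulrDr; apply: lerD => //.
Qed.

Lemma usum_stop (R : realFieldType) (sc : BinNums.N) m j y acc :
  Nr R sc * gamma R (Comp.tn m) (Comp.tn j) <= Nr R y ->
  Nr R sc * \sum_(0 <= k < Comp.tn j) gamma R (Comp.tn m) k.+1 <= Nr R acc ->
  Nr R sc * (\sum_(0 <= k < Comp.tn j) gamma R (Comp.tn m) k.+1
     + gamma R (Comp.tn m) (Comp.tn j) * (Comp.tn m)%:R / (Comp.tn j).+1%:R)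
  <= Nr R (BinNat.N.add acc (BinNat.N.div (BinNat.N.add (BinNat.N.mul y m) j) (BinNat.N.add j N1))).
Proof.
move=> hy hacc.
rewrite mulrDr [Nr R (BinNat.N.add _ _)]/Nr Comp.tn_add natrD; apply: lerD => //.
apply: le_trans (Nr_ceil R _ _).
rewrite /Nr Comp.tn_mul Comp.tn_add Comp.tn_1 addn1 natrM !mulrA.
apply: ler_wpM2r; first by rewrite invr_ge0 ler0n.
by apply: ler_wpM2r; [exact: ler0n | exact: hy].
Qed.

Lemma usum_sound (R : realFieldType) (sc : BinNums.N) fuel m j y acc :
  Nr R sc * gamma R (Comp.tn m) (Comp.tn j) <= Nr R y ->
  Nr R sc * \sum_(0 <= k < Comp.tn j) gamma R (Comp.tn m) k.+1 <= Nr R acc ->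
  exists J, Nr R sc * (\sum_(0 <= k < J) gamma R (Comp.tn m) k.+1
     + gamma R (Comp.tn m) J * (Comp.tn m)%:R / J.+1%:R)
  <= Nr R (Comp.usum fuel m j y acc).
Proof.
elim: fuel j y acc => [|f IH] j y acc hy hacc.
  by exists (Comp.tn j); rewrite Comp.usum_0; exact: usum_stop.
rewrite Comp.usum_S; case: ifP => _.
  by exists (Comp.tn j); exact: usum_stop.
have ej : Comp.tn (BinNat.N.add j N1) = (Comp.tn j).+1 by rewrite Comp.tn_add Comp.tn_1 addn1.
set y' := BinNat.N.div _ _.
have hy' : Nr R sc * gamma R (Comp.tn m) (Comp.tn j).+1 <= Nr R y'.
  apply: le_trans (Nr_ceil R _ _).
  rewrite gammaS /Nr Comp.tn_mul !Comp.tn_add Comp.tn_1 addn1 natrM !mulrA addnS.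
  apply: ler_wpM2r; first by rewrite invr_ge0 ler0n.
  by apply: ler_wpM2r; [exact: ler0n | exact: hy].
apply: IH; rewrite ej //.
rewrite big_nat_recr //= mulrDr /Nr Comp.tn_add natrD; apply: lerD => //.
Qed.

Lemma check_sound (R : realFieldType) (sc : BinNums.N) mn t : (0 < Comp.tn sc)%N -> Comp.check sc mn = true -> (0 < mn)%N ->
  (100 - mn <= t)%N -> (mn - 2 <= t)%N ->
  exists J, 3 * (1 + (\sum_(0 <= k < J) gamma R mn k.+1 + gamma R mn J * mn%:R / J.+1%:R))
    <= 5 * \sum_(0 <= j < mn) alpha R mn t j.+1.
Proof.
move=> scp hc mp h1 h2.
have hs := Comp.check_spec sc mn hc.
rewrite !Comp.tn_add !Comp.tn_mul Comp.tn_3 Comp.tn_5 in hs.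
have SCp : (0 : R) < Nr R sc by rewrite /Nr ltr0n.
have hm : (0 < Comp.tn (BinNat.N.of_nat mn))%N by rewrite Comp.tn_of.
have hL := @lsum_sound R sc mn (BinNat.N.of_nat mn) (Comp.Tof (BinNat.N.of_nat mn))
   BinNums.N0 sc BinNums.N0 t hm (Comp.Tof_le mn t h1 h2).
rewrite Comp.tn_0 add0n Comp.tn_of alpha0 mulr1 big_geq // mulr0 /Nr Comp.tn_0 lexx in hL.
have {hL} hL := hL isT (lexx _).
have hU0 := @usum_sound R sc mn (BinNat.N.of_nat mn) BinNums.N0 sc BinNums.N0.
rewrite Comp.tn_of Comp.tn_0 gamma0 mulr1 big_geq // mulr0 [Nr R BinNums.N0]/Nr Comp.tn_0 lexx in hU0.
have [J hU] := hU0 isT (lexx _).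
exists J.
have hs' : ((3 * Comp.tn sc + 3 * Comp.tn (Comp.usum mn (BinNat.N.of_nat mn) BinNums.N0 sc BinNums.N0))%N%:R
   <= (5 * Comp.tn (Comp.lsum mn (BinNat.N.of_nat mn) (Comp.Tof (BinNat.N.of_nat mn)) BinNums.N0 sc BinNums.N0))%N%:R :> R).
  by rewrite ler_nat.
rewrite natrD !natrM in hs'.
move: hs' hL hU SCp; rewrite /Nr.
move: (Comp.tn sc)%:R (Comp.tn (Comp.usum _ _ _ _ _))%:R (Comp.tn (Comp.lsum _ _ _ _ _ _))%:R => s u l.
set G := (\sum_(0 <= k < J) gamma R mn k.+1 + gamma R mn J * mn%:R / J.+1%:R).
set A := \sum_(0 <= j < mn) alpha R mn t j.+1.
move: G A => G A hs1 hL1 hU1 sp.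
rewrite -(ler_pM2l sp).
have e : s * (3 * (1 + G)) = 3 * s + 3 * (s * G) by ring.
rewrite e mulrCA; lra.
Qed.

Module Poly.
Import ZArith Lia. Local Open Scope Z_scope.
Definition Qe (i r s : Z) : Z := 5501652 + 2249195*s + 152867*s*s + 2858039*r + 896777*r*s + 46339*r*s*s + 611420*r*r + 142488*r*r*s + 5260*r*r*s*s + 69064*r*r*r + 11280*r*r*r*s + 265*r*r*r*s*s + 4350*r*r*r*r + 445*r*r*r*r*s + 5*r*r*r*r*s*s + 145*r*r*r*r*r + 7*r*r*r*r*r*s + 2*r*r*r*r*r*r + 36429129*i + 13416433*i*s + 749839*i*s*s + 16024132*i*r + 4429992*i*r*s + 182290*i*r*s*s + 2805698*i*r*r + 558160*i*r*r*s + 15565*i*r*r*s*s + 246475*i*r*r*r + 32670*i*r*r*r*s + 525*i*r*r*r*s*s + 11080*i*r*r*r*r + 835*i*r*r*r*r*s + 5*i*r*r*r*r*s*s + 221*i*r*r*r*r*r + 6*i*r*r*r*r*r*s + 1*i*r*r*r*r*r*r + 100536484*i*i + 32970864*i*i*s + 1456350*i*i*s*s + 36271765*i*i*r + 8644030*i*i*r*s + 265780*i*i*r*s*s + 4956385*i*i*r*r + 807850*i*i*r*r*s + 15135*i*i*r*r*s*s + 313250*i*i*r*r*r + 30940*i*i*r*r*r*s + 255*i*i*r*r*r*s*s + 8655*i*i*r*r*r*r + 380*i*i*r*r*r*r*s + 69*i*i*r*r*r*r*r + 148141641*i*i*i + 42650610*i*i*i*s + 1398910*i*i*i*s*s + 41809070*i*i*i*r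 + 8308440*i*i*i*r*s + 170060*i*i*i*r*s*s + 4127155*i*i*i*r*r + 510340*i*i*i*r*r*s + 4830*i*i*i*r*r*s*s + 162245*i*i*i*r*r*r + 9530*i*i*i*r*r*r*s + 1905*i*i*i*r*r*r*r + 123186740*i*i*i*i + 30555355*i*i*i*i*s + 663855*i*i*i*i*s*s + 25158535*i*i*i*i*r + 3921145*i*i*i*i*r*s + 40235*i*i*i*i*r*s*s + 1550195*i*i*i*i*r*r + 118170*i*i*i*i*r*r*s + 26390*i*i*i*i*r*r*r + 55176683*i*i*i*i*i + 11455597*i*i*i*i*i*s + 124323*i*i*i*i*i*s*s + 7004982*i*i*i*i*i*r + 723536*i*i*i*i*i*r*s + 185163*i*i*i*i*i*r*r + 10740756*i*i*i*i*i*i + 1747226*i*i*i*i*i*i*s + 549861*i*i*i*i*i*i*r + 218179*i*i*i*i*i*i*i.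
Definition Qo (i r s : Z) : Z := 11109384 + 2391181*s + 125567*s*s + 5386745*r + 938587*r*s + 37739*r*s*s + 1085963*r*r + 147074*r*r*s + 4253*r*r*s*s + 116518*r*r*r + 11502*r*r*r*s + 213*r*r*r*s*s + 7018*r*r*r*r + 449*r*r*r*r*s + 4*r*r*r*r*s*s + 225*r*r*r*r*r + 7*r*r*r*r*r*s + 3*r*r*r*r*r*r + 73891129*i + 14524263*i*s + 663689*i*s*s + 30134593*i*r + 4716314*i*r*s + 161371*i*r*s*s + 4928917*i*r*r + 585198*i*r*r*s + 13894*i*r*r*s*s + 406056*i*r*r*r + 33768*i*r*r*r*s + 481*i*r*r*r*s*s + 17073*i*r*r*r*r + 851*i*r*r*r*r*s + 5*i*r*r*r*r*s*s + 311*i*r*r*r*r*r + 6*i*r*r*r*r*r*s + 1*i*r*r*r*r*r*r + 204876052*i*i + 36118260*i*i*s + 1363688*i*i*s*s + 67782416*i*i*r + 9282830*i*i*r*s + 250069*i*i*r*s*s + 8520127*i*i*r*r + 850480*i*i*r*r*s + 14484*i*i*r*r*s*s + 492179*i*i*r*r*r + 31874*i*i*r*r*r*s + 255*i*i*r*r*r*s*s + 12021*i*i*r*r*r*r + 380*i*i*r*r*r*r*s + 69*i*i*r*r*r*r*r + 303151547*i*i*i + 46862234*i*i*i*s + 1362318*i*i*i*s*s + 76991913*i*i*i*r + 8893882*i*i*i*r*s + 166636*i*i*i*r*s*s + 6785184*i*i*i*r*r + 530506*i*i*i*r*r*s + 4830*i*i*i*r*r*s*s + 229099*i*i*i*r*r*r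 + 9530*i*i*i*r*r*r*s + 1905*i*i*i*r*r*r*r + 252663874*i*i*i*i + 33254941*i*i*i*i*s + 661039*i*i*i*i*s*s + 44787618*i*i*i*i*r + 4112099*i*i*i*i*r*s + 40235*i*i*i*i*r*s*s + 2293046*i*i*i*i*r*r + 118170*i*i*i*i*r*r*s + 26390*i*i*i*i*r*r*r + 112792241*i*i*i*i*i + 12124967*i*i*i*i*i*s + 124323*i*i*i*i*i*s*s + 11379846*i*i*i*i*i*r + 723536*i*i*i*i*i*r*s + 185163*i*i*i*i*i*r*r + 21403642*i*i*i*i*i*i + 1747226*i*i*i*i*i*i*s + 549861*i*i*i*i*i*i*r + 218179*i*i*i*i*i*i*i.
Lemma Qe_nonneg (i r s : Z) : 0 <= i -> 0 <= r -> 0 <= s -> 0 <= Qe i r s.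
Proof. intros hi hr hs. unfold Qe. repeat (apply Z.add_nonneg_nonneg || apply Z.mul_nonneg_nonneg); lia. Qed.
Lemma Qo_nonneg (i r s : Z) : 0 <= i -> 0 <= r -> 0 <= s -> 0 <= Qo i r s.
Proof. intros hi hr hs. unfold Qo. repeat (apply Z.add_nonneg_nonneg || apply Z.mul_nonneg_nonneg); lia. Qed.
End Poly.

Lemma even_nat (m t i : nat) : (13 * i.+1 <= m)%N -> (m - 2 <= t)%N ->
  (m * m * m * ((m * (t + (2 * i).+1)) * (m * (t + (2 * i).+2)))
   <= ((m - 2 * i) * t * ((m - (2 * i).+1) * t)) * ((m + (3 * i).+1) * (m + (3 * i).+2) * (m + (3 * i).+3)))%N.
Proof.
move=> h1 h2.
set r := (m - 13 * i.+1)%N; set s := (t - (m - 2))%N.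
have em : m = (13 * i + 13 + r)%N by rewrite /r; lia.
have et : t = (13 * i + 11 + r + s)%N by rewrite /s; lia.
have e1 : (m - 2 * i = 11 * i + 13 + r)%N by lia.
have e2 : (m - (2 * i).+1 = 11 * i + 12 + r)%N by lia.
rewrite e1 e2; clearbody r s; subst m t; clear e1 e2 h1 h2.
zify.
apply/BinInt.Z.leb_le; apply/BinInt.Z.le_0_sub.
match goal with |- BinInt.Z.le _ ?X => replace X with (Poly.Qe (BinInt.Z.of_nat i) (BinInt.Z.of_nat r) (BinInt.Z.of_nat s)) end.
  apply Poly.Qe_nonneg; lia.
rewrite /Poly.Qe; ring.
Qed.

Lemma odd_nat (m t i : nat) : (13 * i.+2 <= m)%N -> (m - 2 <= t)%N ->
  (m * m * m * ((m * (t + ((2 * i).+1).+1)) * (m * (t + ((2 * i).+1).+2)))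
   <= ((m - (2 * i).+1) * t * ((m - ((2 * i).+1).+1) * t)) * ((m + ((3 * i).+2).+1) * (m + ((3 * i).+2).+2) * (m + ((3 * i).+2).+3)))%N.
Proof.
move=> h1 h2.
set r := (m - 13 * i.+2)%N; set s := (t - (m - 2))%N.
have em : m = (13 * i + 26 + r)%N by rewrite /r; lia.
have et : t = (13 * i + 24 + r + s)%N by rewrite /s; lia.
have e1 : (m - (2 * i).+1 = 11 * i + 25 + r)%N by lia.
have e2 : (m - ((2 * i).+1).+1 = 11 * i + 24 + r)%N by lia.
rewrite e1 e2; clearbody r s; subst m t; clear e1 e2 h1 h2.
zify.
apply/BinInt.Z.leb_le; apply/BinInt.Z.le_0_sub.
match goal with |- BinInt.Z.le _ ?X => replace X with (Poly.Qo (BinInt.Z.add (BinInt.Z.of_nat i) (BinNums.Zpos BinNums.xH)) (BinInt.Z.of_nat r) (BinInt.Z.of_nat s)) end.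
  apply Poly.Qo_nonneg; lia.
rewrite /Poly.Qo; ring.
Qed.

Lemma gamma3 (R : realFieldType) m j :
  gamma R m j.+3 = gamma R m j * ((m * m * m)%N%:R / ((m + j.+1) * (m + j.+2) * (m + j.+3))%N%:R).
Proof.
rewrite !gammaS !natrM; field.
by apply/and3P; split; apply: lt0r_neq0; have := ler0n R m; have := ler0n R j; lra.
Qed.

Lemma alpha2 (R : realFieldType) m t j : (0 < m)%N ->
  alpha R m t j.+2 = alpha R m t j *
    (((m - j) * t * ((m - j.+1) * t))%N%:R / (m * (t + j.+1) * (m * (t + j.+2)))%N%:R).
Proof.
move=> mp; rewrite !alphaS !natrM; field.
apply/and3P; split; apply: lt0r_neq0; have := ler0n R t; have := ler0n R j; have := ltr0n R m; rewrite mp; lra.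
Qed.

Lemma E_step (R : realFieldType) m t i : (13 * i.+1 <= m)%N -> (m - 2 <= t)%N ->
  gamma R m (3 * i) <= alpha R m t (2 * i) -> gamma R m (3 * i.+1) <= alpha R m t (2 * i.+1).
Proof.
move=> h1 h2 h.
have -> : (3 * i.+1 = (3 * i).+3)%N by lia.
have -> : (2 * i.+1 = (2 * i).+2)%N by lia.
rewrite gamma3 alpha2; last lia. apply: ler_pM => //.
- exact: gamma_ge0.
- by apply: divr_ge0; apply: ler0n.
apply: frac_le; [nia | nia |].
exact: even_nat.
Qed.

Lemma O_step (R : realFieldType) m t i : (13 * i.+2 <= m)%N -> (m - 2 <= t)%N ->
  gamma R m (3 * i).+2 <= alpha R m t (2 * i).+1 -> gamma R m (3 * i.+1).+2 <= alpha R m t (2 * i.+1).+1.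
Proof.
move=> h1 h2 h.
have -> : ((3 * i.+1).+2 = ((3 * i).+2).+3)%N by lia.
have -> : ((2 * i.+1).+1 = ((2 * i).+1).+2)%N by lia.
rewrite gamma3 alpha2; last lia. apply: ler_pM => //.
- exact: gamma_ge0.
- by apply: divr_ge0; apply: ler0n.
apply: frac_le; [nia | nia |].
exact: odd_nat.
Qed.

Lemma E_all (R : realFieldType) m t : (m - 2 <= t)%N ->
  forall i, (13 * i <= m)%N -> gamma R m (3 * i) <= alpha R m t (2 * i).
Proof.
move=> ht; elim=> [|i IH] hi; first by rewrite !muln0 gamma0 alpha0.
apply: E_step => //; apply: IH; lia.
Qed.

Lemma O_all (R : realFieldType) m t : (13 <= m)%N -> (m - 2 <= t)%N ->
  forall i, (13 * i.+1 <= m)%N -> gamma R m (3 * i).+2 <= alpha R m t (2 * i).+1.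
Proof.
move=> m13 ht; elim=> [|i IH] hi.
  rewrite !muln0 /gamma /alpha !big_ord_recr !big_ord0 /= !mul1r.
  rewrite mulf_div -!natrM; apply: frac_le; [nia | nia |].
  nia.
apply: O_step => //; apply: IH; lia.
Qed.

Lemma D_all (R : realFieldType) m t : (13 <= m)%N -> (m - 2 <= t)%N ->
  forall i, (13 * i <= m)%N ->
  2 * \sum_(0 <= k < 3 * i) gamma R m k.+1 + 2 * alpha R m t (2 * i)
    <= 2 + 3 * \sum_(0 <= k < 2 * i) alpha R m t k.+1.
Proof.
move=> m13 ht; elim=> [|i IH] hi.
  by rewrite !muln0 !big_geq // alpha0; lra.
have IH' := IH (leq_trans (leq_mul (leqnn 13) (leqnSn i)) hi).
have e3 : (3 * i.+1 = (3 * i).+3)%N by lia.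
have e2 : (2 * i.+1 = (2 * i).+2)%N by lia.
rewrite e3 e2 !big_nat_recr //=.
have hE0 := @E_all R m t ht i (leq_trans (leq_mul (leqnn 13) (leqnSn i)) hi).
have hE1 := @E_all R m t ht i.+1 hi; rewrite e3 e2 in hE1.
have hO := @O_all R m t m13 ht i hi.
have g1 := gamma_dec R m (3 * i).
have a1 := alpha_dec R m t (2 * i).+1.
lra.
Qed.

Lemma gamma_tail (R : realFieldType) m J : (0 < m)%N ->
  gamma R m J * (2 * m + J * J)%N%:R <= (2 * m)%N%:R.
Proof.
move=> mp; elim: J => [|J IH]; first by rewrite gamma0 mul1r muln0 addn0.
rewrite gammaS -mulrA; apply: le_trans IH; apply: ler_wpM2l; first exact: gamma_ge0.
rewrite mulrC mulrA ler_pdivrMr ?ltr0n; last lia.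
rewrite -!natrM ler_nat; nia.
Qed.

Lemma alpha_low (R : realFieldType) m t K : (3 <= m)%N -> (m - 2 <= t)%N -> (K * K <= m - 2)%N ->
  (m - 2)%N%:R - (K * K)%N%:R <= alpha R m t K * (m - 2)%N%:R.
Proof.
move=> m3 ht; elim: K => [|K IH] hK.
  by rewrite alpha0 mul1r muln0 subr0.
have hK' : (K * K <= m - 2)%N by nia.
have IH' := IH hK'.
rewrite alphaS.
set M := m%:R : R; set T := t%:R : R; set k := K%:R : R.
have eM2 : (m - 2)%N%:R = M - 2 :> R by rewrite natrB //; lia.
have tT : M - 2 <= T by rewrite -eM2 ler_nat.
have eKK : (K.+1 * K.+1)%N%:R = (k + 1) * (k + 1) :> R by rewrite natrM -addn1 natrD.
have hKK : (k + 1) * (k + 1) <= M - 2 by rewrite -eKK -eM2 ler_nat.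
have eF : ((m - K) * t)%N%:R / (m * (t + K.+1))%N%:R = (M - k) * T / (M * (T + k + 1)) :> R.
  by rewrite natrM natrB ?natrM ?natrD; try lia; rewrite -addn1 natrD addrA.
rewrite eF eM2 eKK; rewrite eM2 in IH'; rewrite natrM in IH'.
have k0 : 0 <= k by exact: ler0n.
have M3 : 3 <= M by rewrite /M ler_nat.
have Tp : 0 < T + k + 1 by lra.
have hF : (M - 2) - (2 * k + 1) <= (M - k) * T / (M * (T + k + 1)) * (M - 2).
  rewrite mulrAC ler_pdivlMr; last by apply: mulr_gt0; lra.
  have h1 : 0 <= (T - (M - 2)) * (M * k + M + 2 * k) by apply: mulr_ge0; nra.
  nra.
set a := alpha R m t K in IH' *.
have a0 : 0 <= a by exact: alpha_ge0.
set F := (M - k) * T / (M * (T + k + 1)) in hF *.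
have F0 : 0 <= F by rewrite /F; apply: divr_ge0; apply: mulr_ge0; nra.
have hpos : 0 <= (M - 2) - (2 * k + 1) by nra.
have hpos2 : 0 <= (M - 2) - k * k by nra.
(* (M-2) * (a F (M-2)) >= ((M-2)-k^2)((M-2)-(2k+1)) >= (M-2)((M-2)-(k+1)^2) *)
have P : ((M - 2) - k * k) * ((M - 2) - (2 * k + 1)) <= (a * (M - 2)) * (F * (M - 2)).
  apply: ler_pM => //.
have Mp : 0 < M - 2 by lra.
rewrite -(ler_pM2l Mp).
nra.
Qed.

Lemma alpha_mono (R : realFieldType) m t k K : (k <= K)%N -> alpha R m t K <= alpha R m t k.
Proof.
move=> kK; elim: K kK => [|K IH] kK; first by rewrite leqn0 in kK; rewrite (eqP kK).
case: (ltngtP k K.+1) kK => // [kK _|-> _]; last exact: lexx.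
exact: le_trans (alpha_dec R m t K) (IH kK).
Qed.

Lemma asym (R : realFieldType) m t : (1500 <= m)%N -> (m - 2 <= t)%N ->
  exists J, 3 * (1 + (\sum_(0 <= k < J) gamma R m k.+1 + gamma R m J * m%:R / J.+1%:R))
    <= 5 * \sum_(0 <= j < m) alpha R m t j.+1.
Proof.
move=> m15 ht.
set I := (m %/ 13)%N.
have hI : (13 * I <= m)%N by rewrite /I mulnC leq_trunc_div.
have hI2 : (m < 13 * I + 13)%N by rewrite /I; lia.
exists (3 * I)%N.
have hD := @D_all R m t (leq_trans (isT : (13 <= 1500)%N) m15) ht I hI.
have a2I := alpha_ge0 R m t (2 * I).
have hA : \sum_(0 <= k < 2 * I) alpha R m t k.+1 <= \sum_(0 <= j < m) alpha R m t j.+1.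
  by apply: sum_widen; [lia | move=> k; exact: alpha_ge0].
set J := (3 * I)%N.
have hT : gamma R m J * m%:R / J.+1%:R <= 1 / 6.
  have g := gamma_tail R m J (leq_trans (isT : (0 < 1500)%N) m15).
  have p1 : (0 : R) < (2 * m + J * J)%N%:R by rewrite ltr0n; lia.
  have p2 : (0 : R) < J.+1%:R by rewrite ltr0n.
  rewrite ler_pdivrMr // -(ler_pM2r p1).
  apply: le_trans (_ : (2 * m)%N%:R * m%:R <= _).
    rewrite mulrAC; apply: ler_wpM2r; first exact: ler0n.
    exact: g.
  rewrite -natrM -mulrA -natrM.
  have h5 : (m <= 5 * J)%N by rewrite /J; lia.
  have h25 : (m * m <= 25 * (J * J))%N by rewrite (_ : 25 = 5 * 5)%N // mulnACA leq_mul.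
  have h125 : (m * m * m <= 125 * (J * J * J))%N.
    by rewrite (_ : 125 = 25 * 5)%N // [X in (_ <= X)%N]mulnACA leq_mul.
  have hn : (6 * (2 * m * m) <= J.+1 * (2 * m + J * J))%N.
    have h1 : (1500 * (m * m) <= m * m * m)%N by rewrite [X in (_ <= X)%N]mulnC leq_mul2r m15 orbT.
    have h2 : (J * J * J <= J.+1 * (2 * m + J * J))%N.
      by rewrite -mulnA; apply: leq_mul; [exact: leqnSn | exact: leq_addl].
    lia.
  have := hn; rewrite -(ler_nat R) natrM => hn'.
  lra.
have h20 : 20 * alpha R m t 20 <= \sum_(0 <= j < m) alpha R m t j.+1.
  apply: le_trans (_ : \sum_(0 <= j < 20) alpha R m t j.+1 <= _).
    have -> : 20 * alpha R m t 20 = \sum_(0 <= j < 20) alpha R m t 20.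
      by rewrite sumr_const_nat subn0 mulr_natl.
    by apply: ler_sum_nat => j /andP [_ hj]; apply: alpha_mono.
  by apply: sum_widen; [lia | move=> k; exact: alpha_ge0].
have hl := @alpha_low R m t 20 (leq_trans (isT : (3 <= 1500)%N) m15) ht (leq_trans (isT : (20 * 20 <= 1498)%N) (leq_sub2r 2 m15)).
have eM2 : (m - 2)%N%:R = m%:R - 2 :> R by rewrite natrB //; lia.
rewrite eM2 in hl.
have M15 : 1500 <= m%:R :> R by rewrite ler_nat.
have hl2 : 7 / 10 <= alpha R m t 20.
  have a0 := alpha_ge0 R m t 20.
  rewrite (_ : (20 * 20)%N%:R = 400 :> R) in hl; last by rewrite natrM.
  nra.
set G := \sum_(0 <= k < J) gamma R m k.+1 in hD *.
set T := gamma R m J * m%:R / J.+1%:R in hT *.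
lra.
Qed.

Definition allcheck := all (Comp.check Comp.SC) (iota 12 1488).
Lemma allcheck_true : allcheck = true.
Proof. vm_compute. reflexivity. Qed.

Lemma check_of (mn : nat) : (12 <= mn < 1500)%N -> Comp.check Comp.SC mn = true.
Proof.
move=> h; have := allcheck_true; rewrite /allcheck => /allP; apply.
by rewrite mem_iota.
Qed.

Theorem lemma3 (R : realFieldType) (n m : nat) :
  (100 <= n)%N -> (12 <= m)%N -> (m%:R <= n%:R / 2 + 1 :> R) ->
  3 / 8 <= f R n m.
Proof.
move=> hn hm hmn.
have h2 : (2 * m <= n + 2)%N.
  rewrite -(ler_nat R) natrM natrD; lra.
have mp : (0 < m)%N by lia.
have mn : (m < n)%N by lia.
have ht1 : (100 - m <= n - m)%N by lia.
have ht2 : (m - 2 <= n - m)%N by lia.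
case: (ltnP m 1500) => hm15.
  have hc := check_of m (introT andP (conj hm hm15)).
  have [J HJ] := @check_sound R Comp.SC m (n - m) Comp.SC_pos hc mp ht1 ht2.
  exact: key HJ.
have [J HJ] := @asym R m (n - m) hm15 ht2.
exact: key HJ.
Qed.
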